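(* Let $\mathcal{F}$ be a finite family of convex bodies in $\mathbb{R}^d$, let $p\in\mathbb{R}^d$ and let $k$ be a natural number with $k\le d+1$ and $k\le|\mathcal{F}|$. Assume that every point of $\mathbb{R}^d$ is at positive distance from at least one element of $\mathcal{F}$. Let $\mathcal{F}^*\subseteq\mathcal{F}$ be a subfamily of size $k$ such that the distance from $p$ to $\bigcap_{K\in\mathcal{F}^*}K$ is maximal among all subfamilies of $\mathcal{F}$ of size $k$. If $\bigcap_{K\in\mathcal{F}^*}K\neq\emptyset$, then the point $q$ of $\bigcap_{K\in\mathcal{F}^*}K$ closest to $p$ lies in $\bigcap_{K\in\mathcal{F}^*}\partial K$.
   Context: A convex body is a compact convex set with nonempty interior; $\partial K$ denotes the boundary of $K$; distances are Euclidean, with the distance to the empty set taken to be $\infty$. *)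

(* Defs.v *)
From HB Require Import structures.
From mathcomp Require Import all_boot all_order all_algebra.
From mathcomp Require Import all_classical all_reals all_analysis.
Set Implicit Arguments. Unset Strict Implicit. Unset Printing Implicit Defensive.
Import Order.TTheory GRing.Theory Num.Theory.
Import numFieldNormedType.Exports.
Local Open Scope classical_set_scope.
Local Open Scope ring_scope.

(* Euclidean norm on R^d (the library's norm on matrices is the max norm,
   which induces the same topology but not the Euclidean distance). *)
Definition eucl_norm {R : realType} {d : nat} (v : 'rV[R]_d) : R :=
  Num.sqrt (\sum_(i < d) (v ord0 i) ^+ 2).

(* Euclidean distance from a point to a set, in the extended reals;
   the infimum over the empty set is +oo. *)
Definition dist_set {R : realType} {d : nat} (p : 'rV[R]_d) (A : set 'rV[R]_d)
  : \bar R :=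
  ereal_inf [set (eucl_norm (p - a))%:E | a in A].

Definition convex_set_rV {R : realType} {d : nat} (K : set 'rV[R]_d) : Prop :=
  forall x y (t : R), K x -> K y -> 0 <= t <= 1 -> K (t *: x + (1 - t) *: y).

Definition convex_body {R : realType} {d : nat} (K : set 'rV[R]_d) : Prop :=
  compact K /\ convex_set_rV K /\ (interior K !=set0).

Definition boundary {R : realType} {d : nat} (K : set 'rV[R]_d) : set 'rV[R]_d :=
  closure K `\` interior K.

Definition subfam_inter {R : realType} {d n : nat}
  (K : 'I_n -> set 'rV[R]_d) (S : {set 'I_n}) : set 'rV[R]_d :=
  [set x | forall i, i \in S -> K i x].

(* Main.v *)
Require Import Defs.
From HB Require Import structures.
From mathcomp Require Import all_boot all_order all_algebra.
From mathcomp Require Import all_classical all_reals all_analysis.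
From mathcomp Require Import ring lra.
Import Order.TTheory GRing.Theory Num.Theory.
Import numFieldNormedType.Exports.
Local Open Scope classical_set_scope.
Local Open Scope ring_scope.

Definition sq {R : realType} {d : nat} (v : 'rV[R]_d) : R :=
  \sum_(i < d) (v ord0 i) ^+ 2.

Lemma sq_ge0 {R : realType} {d : nat} (v : 'rV[R]_d) : 0 <= sq v.
Proof. by apply: sumr_ge0 => i _; exact: sqr_ge0. Qed.

Lemma norm_le_sq {R : realType} {d : nat} (v : 'rV[R]_d) : `|v| ^+ 2 <= sq v.
Proof.
have h : `|v| <= Num.sqrt (sq v).
  rewrite [`|v|]mx_normrE; apply: bigmax_le; first exact: sqrtr_ge0.
  move=> [a b] _ /=; rewrite (ord1 a) -sqrtr_sqr ler_sqrt; last exact: sq_ge0.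
  rewrite /sq (bigD1 b) //= lerDl; apply: sumr_ge0 => i _; exact: sqr_ge0.
rewrite -(sqr_sqrtr (sq_ge0 v)).
by rewrite ler_pXn2r ?nnegrE ?sqrtr_ge0 ?normr_ge0.
Qed.

Lemma sq_ident {R : realType} {d : nat} (p q x : 'rV[R]_d) (t : R) :
  sq (p - (t *: x + (1 - t) *: q)) =
  (1 - t) * sq (p - q) + t * sq (p - x) - t * (1 - t) * sq (x - q).
Proof.
rewrite /sq !mulr_sumr -big_split -sumrB /=; apply: eq_bigr => i _.
rewrite !mxE; ring.
Qed.

Theorem proposition13p1 (R : realType) (d n k : nat)
  (K : 'I_n -> set 'rV[R]_d) (p : 'rV[R]_d) (Sstar : {set 'I_n}) :
  injective K ->
  (forall i, convex_body (K i)) ->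
  (k <= d.+1)%N -> (k <= n)%N ->
  (forall x : 'rV[R]_d, exists i, (0 < dist_set x (K i))%E) ->
  #|Sstar| = k ->
  (forall S : {set 'I_n}, #|S| = k ->
     (dist_set p (subfam_inter K S) <= dist_set p (subfam_inter K Sstar))%E) ->
  subfam_inter K Sstar !=set0 ->
  forall q : 'rV[R]_d, subfam_inter K Sstar q ->
    (eucl_norm (p - q))%:E = dist_set p (subfam_inter K Sstar) ->
    forall i, i \in Sstar -> boundary (K i) q.
Proof.
move=> Kinj Kcvx _ _ Hpos Hcard Hmax _ q Hq Hqd j Hj.
split; first exact: subset_closure (Hq j Hj).
move=> Hint.
have Hmin : forall y, subfam_inter K Sstar y -> sq (p - q) <= sq (p - y).
  move=> y Hy.
  have : ((eucl_norm (p - q))%:E <= (eucl_norm (p - y))%:E)%E.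
    by rewrite Hqd; apply: ereal_inf_lbound; exists y.
  by rewrite lee_fin /eucl_norm ler_sqrt //; exact: sq_ge0.
have [m Hm] := Hpos q.
have Hqm : ~ K m q.
  move=> Kmq; move: Hm; apply/negP; rewrite -leNgt; apply: ereal_inf_lbound.
  exists q => //; rewrite subrr /eucl_norm big1 ?sqrtr0 // => i _.
  by rewrite mxE expr2 mulr0.
have HmS : m \notin Sstar by apply/negP => /Hq.
have Kmcl : closed (K m) := compact_closed (@norm_hausdorff R _) (Kcvx m).1.
have [r r0 Hr] : exists2 r : R, 0 < r & forall y, `|q - y| < r -> ~ K m y.
  have : nbhs q (~` K m).
    by apply: open_nbhs_nbhs; split => //; exact: closed_openC.
  move/nbhs_ballP => [r r0 Hb]; exists r => // y Hy; apply: Hb.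
  by rewrite -ball_normE /=.
have [e e0 He] : exists2 e : R, 0 < e & forall y, `|q - y| < e -> K j y.
  move: Hint => /nbhs_ballP [e e0 Hb]; exists e => // y Hy; apply: Hb.
  by rewrite -ball_normE /=.
have Key : forall x, (forall i, i \in Sstar :\ j -> K i x) ->
    sq (p - q) + sq (x - q) / 2 <= sq (p - x).
  move=> x Hx.
  set c := `|q - x|.
  have c0 : 0 <= c := normr_ge0 _.
  set u := e / (2 * (c + 1)).
  have u0 : 0 < u by rewrite divr_gt0 // mulr_gt0 // ltr_pwDr.
  have hu : u * (2 * (c + 1)) = e.
    by rewrite /u mulfVK // mulf_neq0 // gt_eqF // ltr_pwDr.
  set t := Num.min (1 / 2) u.
  have t0 : 0 < t by rewrite lt_min u0 andbT divr_gt0.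
  have t12 : t <= 1 / 2 by rewrite ge_min lexx.
  have tu : t <= u by rewrite ge_min lexx orbT.
  have tc : t * c < e by rewrite -hu; nra.
  set y := t *: x + (1 - t) *: q.
  have Hy : subfam_inter K Sstar y.
    move=> i Hi; case: (eqVneq i j) => [-> | hij].
    - apply: He.
      have -> : q - y = t *: (q - x).
        by rewrite /y scalerBl scale1r scalerBr; apply/rowP => a; rewrite !mxE; ring.
      by rewrite mx_normZ ger0_norm // ltW.
    - apply: (Kcvx i).2.1; [apply: Hx; by rewrite in_setD1 hij Hi | exact: Hq |].
      by rewrite (ltW t0) /=; apply: (le_trans t12); lra.
  have := Hmin y Hy; rewrite sq_ident.
  have A0 := sq_ge0 (p - q); have B0 := sq_ge0 (p - x); have C0 := sq_ge0 (x - q).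
  move=> h.
  have hC : 0 <= t * sq (x - q) * (1 / 2 - t) by rewrite mulr_ge0 ?mulr_ge0 ?subr_ge0 // ltW.
  have : 0 <= t * (sq (p - x) - sq (p - q) - sq (x - q) / 2) by lra.
  by rewrite pmulr_rge0 //; lra.
set S' := m |: (Sstar :\ j).
have HS' : #|S'| = k.
  by rewrite cardsU1 -Hcard (cardsD1 j Sstar) Hj in_setD1 (negbTE HmS) andbF.
have := Hmax S' HS'; rewrite -Hqd; apply/negP; rewrite -ltNge.
apply: (@lt_le_trans _ _ (Num.sqrt (sq (p - q) + r ^+ 2 / 2))%:E).
  rewrite lte_fin /eucl_norm ltr_sqrt; last first.
    by rewrite ltr_pwDr ?sq_ge0 // divr_gt0 // exprn_gt0.
  by rewrite ltrDl divr_gt0 // exprn_gt0.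
apply: le_ereal_inf_tmp => _ [x Hx <-].
rewrite lee_fin /eucl_norm ler_sqrt; last exact: sq_ge0.
have Hx' : forall i, i \in Sstar :\ j -> K i x.
  by move=> i Hi; apply: Hx; rewrite /S' setU1r.
have Kmx : K m x by apply: Hx; rewrite /S' setU11.
have rc : r <= `|x - q|.
  by rewrite distrC leNgt; apply/negP => /Hr.
have := norm_le_sq (x - q).
have := Key x Hx'.
have nn := normr_ge0 (x - q).
move=> h1 h2.
have : r ^+ 2 <= `|x - q| ^+ 2 by rewrite ler_pXn2r ?nnegrE // ltW.
move=> h3; rewrite -/(sq (p - x)); lra.
Qed.
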